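(* A vector $w\in\mathbb{R}^n$, $w\ge0$, is strongly bilevel feasible if and only if both of the following hold: (i) there exists exactly one bilevel feasible decomposition $(w^k)_{k\in\mathcal{K}}$ of $w$; (ii) in this unique decomposition, each $w^k$ is individually strongly bilevel feasible.
   Context: Multi-commodity network pricing setting: $G=(\mathcal{V},\mathcal{A})$ directed graph with arc costs $c\ge0$, nonempty tolled arc set $\mathcal{A}_1\subsetneq\mathcal{A}$, $n=|\mathcal{A}_1|$, $N$ node–arc incidence matrix; finite set $\mathcal{K}$ of commodities, commodity $k$ having origin $o^k$ and destination $d^k$ connected by a path of arcs not in $\mathcal{A}_1$; $b^k_{o^k}=1$, $b^k_{d^k}=-1$, other entries $0$; $\mathcal{X}^k=\{x\in\mathbb{R}^{\mathcal{A}}: Nx=b^k,\ x\ge0\}$; $x_{\mathcal{A}_1}$ is the restriction of $x$ to $\mathcal{A}_1$. For $t\in\mathbb{R}^n$ let $f^k(t)=\min\{c^\top x+t^\top x_{\mathcal{A}_1}: x\in\mathcal{X}^k\}$ if $t\ge0$, $-\infty$ otherwise; $f=\sum_k f^k$; $g^k(w)=\sup_t\{f^k(t)-t^\top w\}$, $g(w)=\sup_t\{f(t)-t^\top w\}$. A vector $w\ge0$ is strongly bilevel feasible if $\{w\}$ is the projection onto $w$-space of a face of $\operatorname{epi}(g)$ whose affine hull's direction space does not contain $(0,1)$ (equivalently $\{(w,g(w))\}$ is a face of $\operatorname{epi}(g)$); $w^k\ge0$ is individually strongly bilevel feasible if the same holds with $g^k$ in place of $g$. A decomposition of $w$ is a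 tuple $(w^k)_{k\in\mathcal{K}}$ of vectors $w^k\ge0$ with $\sum_k w^k=w$; it is bilevel feasible if $g(w)=\sum_k g^k(w^k)$. *)

(* Defs.v *)
From mathcomp Require Import all_boot all_order all_algebra.
From mathcomp Require Import all_classical all_reals ereal.
Set Implicit Arguments. Unset Strict Implicit. Unset Printing Implicit Defensive.
Import Order.TTheory GRing.Theory Num.Theory.
Local Open Scope classical_set_scope.
Local Open Scope ring_scope.

Section NetworkPricing.
Variable R : realType.
Variables (V A : finType) (src dst : A -> V).
Variable c : A -> R.
Variable A1 : {set A}.
Variable K : finType.
Variables (o d : K -> V).

(* vectors of R^n, n = #|A1|, coordinate i <-> tolled arc enum_val i *)
Notation vecn := 'rV[R]_#|A1|.

Definition incidence (v : V) (a : A) : R := (src a == v)%:R - (dst a == v)%:R.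

Definition bvec (k : K) (v : V) : R := (v == o k)%:R - (v == d k)%:R.

Definition Xk (k : K) : set (A -> R) :=
  [set x | (forall v, \sum_a incidence v a * x a = bvec k v) /\ (forall a, 0 <= x a)].

Definition costx (x : A -> R) : R := \sum_a c a * x a.
Definition tollx (t : vecn) (x : A -> R) : R :=
  \sum_(i < #|A1|) t ord0 i * x (enum_val i).
Definition dotn (t w : vecn) : R := \sum_(i < #|A1|) t ord0 i * w ord0 i.

Definition nonneg (t : vecn) : bool := [forall i, 0 <= t ord0 i].

Definition fk (k : K) (t : vecn) : \bar R :=
  if nonneg t then ereal_inf [set (costx x + tollx t x)%:E | x in Xk k] else -oo%E.

Definition f (t : vecn) : \bar R := (\sum_k fk k t)%E.

Definition gk (k : K) (w : vecn) : \bar R :=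
  ereal_sup [set (fk k t - (dotn t w)%:E)%E | t in [set: vecn]].

Definition g (w : vecn) : \bar R :=
  ereal_sup [set (f t - (dotn t w)%:E)%E | t in [set: vecn]].

Definition pt := (vecn * R)%type.

Definition epi (h : vecn -> \bar R) : set pt := [set p | (h p.1 <= p.2%:E)%E].

Definition comb (l : R) (p q : pt) : pt :=
  (l *: p.1 + (1 - l) *: q.1, l * p.2 + (1 - l) * q.2).

Definition is_face (C F : set pt) : Prop :=
  F `<=` C /\
  (forall p q l, F p -> F q -> 0 <= l <= 1 -> F (comb l p q)) /\
  (forall p q l, C p -> C q -> 0 < l < 1 -> F (comb l p q) -> F p /\ F q).

(* v belongs to the direction space of aff(F), i.e. to span(F - F) *)
Definition in_dir_space (F : set pt) (v : pt) : Prop :=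
  exists (m : nat) (p q : 'I_m -> pt) (cf : 'I_m -> R),
    (forall i, F (p i) /\ F (q i)) /\
    v.1 = \sum_i cf i *: ((p i).1 - (q i).1) /\
    v.2 = \sum_i cf i * ((p i).2 - (q i).2).

Definition strongly_bf_wrt (h : vecn -> \bar R) (w : vecn) : Prop :=
  nonneg w /\
  exists F : set pt, is_face (epi h) F /\
    [set p.1 | p in F] = [set w] /\ ~ in_dir_space F (0, 1).

Definition strongly_bilevel_feasible (w : vecn) : Prop := strongly_bf_wrt g w.
Definition indiv_strongly_bilevel_feasible (k : K) (wk : vecn) : Prop :=
  strongly_bf_wrt (gk k) wk.

Definition decomposition (w : vecn) (wk : K -> vecn) : Prop :=
  (forall k, nonneg (wk k)) /\ \sum_k wk k = w.

Definition bilevel_feasible_decomposition (w : vecn) (wk : K -> vecn) : Prop :=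
  decomposition w wk /\ g w = (\sum_k gk k (wk k))%E.

Fixpoint walk (u : V) (p : seq A) (v : V) : Prop :=
  match p with
  | [::] => u = v
  | a :: p' => src a = u /\ walk (dst a) p' v
  end.

Definition network_assumptions : Prop :=
  (forall a, 0 <= c a) /\
  A1 != finset.set0 /\ A1 \proper finset.setT /\
  (forall k, o k != d k) /\
  (forall k, exists p : seq A, walk (o k) p (d k) /\ all (fun a => a \notin A1) p).

End NetworkPricing.

(* Main.v *)
Require Import Defs.
From mathcomp Require Import all_boot all_order all_algebra.
From mathcomp Require Import all_classical all_reals ereal.
From mathcomp Require Import ring lra.
Set Implicit Arguments. Unset Strict Implicit. Unset Printing Implicit Defensive.
Import Order.TTheory GRing.Theory Num.Theory.
Local Open Scope classical_set_scope.
Local Open Scope ring_scope.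

Section Step.
Variable R : realFieldType.
Variable I : finType.
Variable al : I -> R.

Definition Cf (h : I -> R) (i' : I + I * I) : R :=
  match i' with
  | inl i => if al i == 0 then h i else 0
  | inr (p, q) => if (0 < al p) && (al q < 0) then - al q * h p + al p * h q else 0
  end.

Definition trivc (i' : I + I * I) : bool :=
  match i' with
  | inl i => al i != 0
  | inr (p, q) => ~~ ((0 < al p) && (al q < 0))
  end.

Definition Yf (y' : I + I * I -> R) (i : I) : R :=
  (if al i == 0 then y' (inl i) else 0)
  + \sum_q (if (0 < al i) && (al q < 0) then y' (inr (i, q)) * - al q else 0)
  + \sum_p (if (0 < al p) && (al i < 0) then y' (inr (p, i)) * al p else 0).

Lemma Yf_lin (y' : I + I * I -> R) (h : I -> R) :
  \sum_i Yf y' i * h i = \sum_i' y' i' * Cf h i'.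
Proof.
rewrite big_sumType /=.
have -> : \sum_(pq : I * I) y' (inr pq) * Cf h (inr pq) =
   \sum_p \sum_q ((if (0 < al p) && (al q < 0) then y' (inr (p, q)) * - al q else 0) * h p
                + (if (0 < al p) && (al q < 0) then y' (inr (p, q)) * al p else 0) * h q).
  rewrite pair_bigA; apply: eq_bigr => -[p q] _ /=.
  by rewrite /Cf; case: ifP => _; rewrite ?mul0r ?mulr0 ?addr0 // mulrDr !mulrA.
under [X in _ = _ + X]eq_bigr => p _ do rewrite big_split /= -mulr_suml.
rewrite big_split /= [X in _ + (_ + X)]exchange_big /=.
rewrite /Yf; under eq_bigr do rewrite !mulrDl.
rewrite !big_split /= addrA; congr (_ + _ + _).
  by apply: eq_bigr => i _; case: ifP; rewrite ?mul0r ?mulr0.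
by apply: eq_bigr => i _; rewrite mulr_suml.
Qed.

Lemma Yf_ge0 (y' : I + I * I -> R) : (forall i', 0 <= y' i') -> forall i, 0 <= Yf y' i.
Proof.
move=> H i; rewrite /Yf; apply: addr_ge0; first apply: addr_ge0.
- by case: ifP.
- apply: sumr_ge0 => q _; case: ifP => // /andP[_ Hq]; apply: mulr_ge0 => //; lra.
- apply: sumr_ge0 => p _; case: ifP => // /andP[Hp _]; apply: mulr_ge0 => //; lra.
Qed.

Lemma Cf_al i' : Cf al i' = 0.
Proof. case: i' => [i|[p q]] /=; first by case: ifP => // /eqP.
by case: ifP => // _; rewrite mulrC; lra.
Qed.
Lemma Cf_ext (h h' : I -> R) i' : (forall i, h i = h' i) -> Cf h i' = Cf h' i'.
Proof. by move=> H; case: i' => [i|[p q]] /=; rewrite !H. Qed.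
End Step.

Section FM.
Variable R : realFieldType.

Lemma sep_lemma (I : finType) (L U : I -> R) (PL PU : pred I) :
  (forall p q, PL q -> PU p -> L q <= U p) ->
  exists z, (forall q, PL q -> L q <= z) /\ (forall p, PU p -> z <= U p).
Proof.
move=> H.
case: (pickP PL) => [q0 Hq0|HN].
  exists (\big[Num.max/L q0]_(q | PL q) L q); split.
    by move=> q Hq; rewrite (bigD1 q) //= le_max lexx.
  move=> p Hp; elim/big_ind: _ => //; first exact: H.
    by move=> x y Hx Hy; rewrite ge_max Hx Hy.
  by move=> q Hq; apply: H.
exists (\big[Num.min/0]_(p | PU p) U p); split.
  by move=> q; rewrite HN.
by move=> p Hp; rewrite (bigD1 p) //= ge_min lexx.
Qed.

Lemma fm (n : nat) : forall (I : finType) (a : I -> 'I_n -> R) (b : I -> R),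
  (exists x : 'I_n -> R, forall i, \sum_j a i j * x j <= b i) \/
  (exists y : I -> R, (forall i, 0 <= y i) /\ (forall j, \sum_i y i * a i j = 0)
      /\ \sum_i y i * b i < 0).
Proof.
elim: n => [|n IH] I a b.
  case: (pickP (fun i => b i < 0)) => [i0 Hi0|Hb].
    right; exists (fun i => (i == i0)%:R); split; first by move=> i; case: (_ == _).
    split; first by case.
    rewrite (bigD1 i0) //= eqxx mul1r big1 ?addr0 // => i /negbTE ->.
    by rewrite mul0r.
  left; exists (fun _ => 0) => i; rewrite big_ord0.
  by move: (Hb i) => /negbT; rewrite -leNgt.
pose al := fun i => a i ord_max.
have wdE : forall j : 'I_n, widen_ord (leqnSn n) j = lift ord_max j.
  by move=> j; apply: val_inj; rewrite /= /bump leqNgt ltn_ord add0n.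
pose a' := fun i' (j : 'I_n) => Cf al (fun i => a i (widen_ord (leqnSn n) j)) i'.
pose b' := fun i' => Cf al b i' + (trivc al i')%:R.
case: (IH _ a' b') => [[x' Hx']|[y' [Hy0 [Hya Hyb]]]].
- pose S := fun i => \sum_(j < n) a i (widen_ord (leqnSn n) j) * x' j.
  have HS : forall i', \sum_j a' i' j * x' j = Cf al S i'.
    move=> [i|[p q]]; rewrite /a' /Cf; case: ifP => _;
      try (by rewrite big1 // => j _; rewrite mul0r).
    by [].
    under eq_bigr do rewrite mulrDl -!mulrA.
    by rewrite big_split -!mulr_sumr.
  have hinl : forall i, al i = 0 -> S i <= b i.
    move=> i Hi; move: (Hx' (inl i)); rewrite HS /b' /Cf /trivc Hi eqxx /=.
    by rewrite addr0.
  have hpair : forall p q, 0 < al p -> al q < 0 ->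
      - al q * S p + al p * S q <= - al q * b p + al p * b q.
    move=> p q Hp Hq; move: (Hx' (inr (p, q))); rewrite HS /b' /Cf /trivc Hp Hq /=.
    by rewrite addr0.
  case: (@sep_lemma I (fun q => (b q - S q) / al q)
        (fun p => (b p - S p) / al p) (fun q => al q < 0) (fun p => 0 < al p)) => [p q /= Hq Hp|z [HzL HzU]].
    have Hp0 : al p != 0 by rewrite gt_eqF.
    have Hq0 : al q != 0 by rewrite lt_eqF.
    set u := (b p - S p) / al p; set l := (b q - S q) / al q.
    have eu : b p = u * al p + S p by rewrite /u divfK // subrK.
    have el : b q = l * al q + S q by rewrite /l divfK // subrK.
    have := hpair p q Hp Hq; rewrite eu el => H.
    have hpq : 0 < al p * - al q by apply: mulr_gt0 => //; rewrite oppr_gt0.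
    rewrite -subr_ge0 -(pmulr_rge0 _ hpq).
    have -> : al p * - al q * (u - l) = - al q * (u * al p + S p) + al p * (l * al q + S q) - (- al q * S p + al p * S q) by ring.
    by rewrite subr_ge0.
  left; exists (fun j => if unlift ord_max j is Some j' then x' j' else z) => i.
  rewrite big_ord_recr /= unlift_none.
  under eq_bigr do rewrite wdE liftK -wdE.
  rewrite -/(S i) -/(al i).
  case: (ltgtP (al i) 0) => Hai.
  + have := HzL i Hai; rewrite /= ler_ndivrMr // => H.
    by rewrite mulrC -lerBrDl.
  + have := HzU i Hai; rewrite /= ler_pdivlMr // => H.
    by rewrite mulrC -lerBrDl.
  + by rewrite Hai mul0r addr0; apply: hinl.
- right; exists (Yf al y'); split; first exact: Yf_ge0.
  split.
    move=> j; case: (unliftP ord_max j) => [j'|] ->.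
      rewrite Yf_lin -[RHS](Hya j'); apply: eq_bigr => i' _.
      by rewrite /a'; congr (_ * _); apply: Cf_ext => i; rewrite wdE.
    rewrite Yf_lin big1 // => i' _; have := Cf_al al i'; rewrite /al => ->.
    by rewrite mulr0.
  rewrite Yf_lin; apply: le_lt_trans Hyb; apply: ler_sum => i' _.
  by apply: ler_wpM2l => //; rewrite /b' lerDl.
Qed.

End FM.

Section FMT.
Variable R : realFieldType.
Lemma farkas (I J : finType) (a : I -> J -> R) (b : I -> R) :
  (exists x : J -> R, forall i, \sum_j a i j * x j <= b i) \/
  (exists y : I -> R, (forall i, 0 <= y i) /\ (forall j, \sum_i y i * a i j = 0)
      /\ \sum_i y i * b i < 0).
Proof.
have bij : bijective (@enum_rank J).
  by exists enum_val; [exact: enum_rankK | exact: enum_valK].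
case: (@fm R #|J| I (fun i k => a i (enum_val k)) b) => [[x Hx]|[y [Hy0 [Hya Hyb]]]].
  left; exists (fun j => x (enum_rank j)) => i.
  apply: le_trans (Hx i); rewrite (reindex (@enum_rank J)) /=; last exact: onW_bij.
  by apply: ler_sum => j _; rewrite (@enum_rankK J j).
right; exists y; split => //; split => // j.
by rewrite -[RHS](Hya (enum_rank j)); apply: eq_bigr => i _; rewrite (@enum_rankK J j).
Qed.
End FMT.

Section Generic.
Variable R : realType.
Variable A : finType.
Variable A1 : {set A}.
Local Notation vecn := 'rV[R]_#|A1|.

Definition Ext (h : vecn -> \bar R) (u : vecn) (rho : R) : Prop :=
  forall p q l, epi h p -> epi h q -> 0 < l < 1 -> comb l p q = (u, rho) ->
    p = (u, rho) /\ q = (u, rho).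

Lemma comb_same l (p : pt R A1) : comb l p p = p.
Proof.
case: p => x r; rewrite /comb /=; congr (_, _).
  by rewrite -scalerDl addrC subrK scale1r.
by ring.
Qed.

Lemma sbf_char (h : vecn -> \bar R) (u : vecn) :
  strongly_bf_wrt h u <-> nonneg u /\ exists rho, h u = rho%:E /\ Ext h u rho.
Proof.
split.
  move=> [Hu [F [[FC [Fconv Fext]] [Fproj Fdir]]]]; split => //.
  have : [set p.1 | p in F] u by rewrite Fproj.
  move=> [p0 Fp0 Hp0].
  have Fall : forall q, F q -> q = p0.
    move=> [x r] Fq.
    have Hx : x = u.
      have : [set p.1 | p in F] x by exists (x, r).
      by rewrite Fproj.
    case: p0 Fp0 Hp0 => x0 r0 Fp0 /= Hx0; subst x x0.
    have [//|Hne] := eqVneq r r0; first by move=> ->.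
    exfalso; apply: Fdir.
    exists 1%N, (fun _ => (u, r)), (fun _ => (u, r0)), (fun _ => (r - r0)^-1).
    split; first by move=> _; split.
    rewrite !big_ord1 /= subrr scaler0; split => //.
    by rewrite mulVf // subr_eq0.
  case: p0 Fp0 Hp0 Fall => x0 r Fp0 /= Hx0 Fall; subst x0.
  have epir : (h u <= r%:E)%E by apply: (FC _ Fp0).
  have minr : forall r', (h u <= r'%:E)%E -> r <= r'.
    move=> r' Hr'; rewrite leNgt; apply/negP => Hlt.
    have e1 : epi h (u, r') by [].
    have e2 : epi h (u, 2 * r - r').
      rewrite /epi /=; apply: le_trans Hr' _; rewrite lee_fin; lra.
    have Hc : comb (1/2) (u, r') (u, 2 * r - r') = (u, r).
      rewrite /comb /=; congr (_, _).
        by rewrite -scalerDl addrC subrK scale1r.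
      by field.
    have : F (comb (1/2) (u, r') (u, 2 * r - r')) by rewrite Hc.
    move=> /(Fext _ _ _ e1 e2) [] //; first by apply/andP; split; lra.
    by move=> /Fall [] Heq; move: Hlt; rewrite Heq ltxx.
  exists r; split.
    move: epir minr; case: (h u) => [x| |] //=.
      by rewrite lee_fin => H1 H2; congr (_%:E); apply/eqP; rewrite eq_le H1 H2.
    by move=> _ /(_ (r - 1) (leNye _)) H; exfalso; clear -H; lra.
  move=> p q l ep eq Hl Hc.
  have : F (comb l p q) by rewrite Hc.
  by move=> /(Fext _ _ _ ep eq Hl) [/Fall -> /Fall ->].
move=> [Hu [rho [Hh HE]]]; split => //.
exists [set (u, rho)]; split.
  split; first by move=> p ->; rewrite /epi /= Hh.
  split; first by move=> p q l -> -> _; rewrite comb_same.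
  by move=> p q l ep eq Hl Hc; exact: (HE p q l ep eq Hl Hc).
split; first by rewrite image_set1.
- move=> [m [p [q [cf [Hpq [_ H2]]]]]].
  have : \sum_i cf i * ((p i).2 - (q i).2) = 0.
    by apply: big1 => i _; case: (Hpq i) => -> ->; rewrite subrr mulr0.
  by rewrite -H2 => /eqP; rewrite oner_eq0.
Qed.
End Generic.

Lemma shift_cancel (W : zmodType) (s x y : W) : s - x + y = s -> y = x.
Proof. move=> H. apply: (@addrI _ (s - x)). by rewrite H subrK. Qed.

Lemma pos_comb_eq (R : realFieldType) (l x y : R) : 0 < l < 1 -> 0 <= x -> 0 <= y ->
  l * x + (1 - l) * y = 0 -> x = 0 /\ y = 0.
Proof.
move=> /andP[Hl0 Hl1] Hx Hy H.
have h1 : 0 <= l * x by apply: mulr_ge0 => //; exact: ltW.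
have h2 : 0 <= (1 - l) * y by apply: mulr_ge0 => //; lra.
have e1 : l * x = 0 by move: h1 h2 H; lra.
have e2 : (1 - l) * y = 0 by move: h1 h2 H; lra.
split.
  by move/eqP: e1; rewrite mulf_eq0 => /orP[/eqP Hl|/eqP //]; move: Hl0; rewrite Hl ltxx.
by move/eqP: e2; rewrite mulf_eq0 => /orP[/eqP Hl|/eqP //]; move: Hl Hl1; lra.
Qed.

Lemma absp1_le (R : realDomainType) (g : R) : `|g| + 1 <= g -> False.
Proof. by move=> H; have := ler_norm g; move: H; lra. Qed.

Section Net.
Variable R : realType.
Variables (V A : finType) (src dst : A -> V) (c : A -> R) (A1 : {set A}) (K : finType) (o d : K -> V).
Hypothesis Hnet : network_assumptions src dst c A1 o d.
Local Notation vecn := 'rV[R]_#|A1|.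
Local Notation XK := (Xk src dst o d).
Local Notation FK := (@fk R V A src dst c A1 K o d).
Local Notation GK := (@gk R V A src dst c A1 K o d).
Local Notation Gg := (@g R V A src dst c A1 K o d).
Local Notation Ff := (@f R V A src dst c A1 K o d).

Lemma c_ge0 a : 0 <= c a.
Proof. by case: Hnet => H _; apply: H. Qed.

Lemma dotnD (t u v : vecn) : dotn t (u + v) = dotn t u + dotn t v.
Proof. by rewrite /dotn -big_split; apply: eq_bigr => i _; rewrite mxE mulrDr. Qed.

Lemma dotnZ (t u : vecn) l : dotn t (l *: u) = l * dotn t u.
Proof.
rewrite /dotn mulr_sumr; apply: eq_bigr => i _; rewrite mxE.
by rewrite mulrCA.
Qed.

Lemma dotnN (t u : vecn) : dotn t (- u) = - dotn t u.
Proof. by rewrite -scaleN1r dotnZ mulN1r. Qed.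

Lemma dotn0 (u : vecn) : dotn 0 u = 0.
Proof. by rewrite /dotn big1 // => i _; rewrite mxE mul0r. Qed.

Lemma dotn_sum (t : vecn) (uk : K -> vecn) :
  dotn t (\sum_k uk k) = \sum_k dotn t (uk k).
Proof.
rewrite /dotn exchange_big /=; apply: eq_bigr => i _.
by rewrite summxE mulr_sumr.
Qed.

Lemma nonnegP (t : vecn) : nonneg t -> forall i, 0 <= t ord0 i.
Proof. by move/forallP. Qed.

Lemma costx_ge0 x : (forall a, 0 <= x a) -> 0 <= costx c x.
Proof. by move=> H; apply: sumr_ge0 => a _; apply: mulr_ge0 => //; apply: c_ge0. Qed.

Lemma tollx_ge0 (t : vecn) x : nonneg t -> (forall a, 0 <= x a) -> 0 <= tollx t x.
Proof. by move=> /nonnegP Ht H; apply: sumr_ge0 => i _; apply: mulr_ge0. Qed.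

Lemma walk_flow u p e : walk src dst u p e -> forall v,
  \sum_a incidence R src dst v a * (count_mem a p)%:R = (v == u)%:R - (v == e)%:R.
Proof.
elim: p u => [|a0 p IH] u /=.
  by move=> -> v; rewrite subrr big1 // => a _; rewrite mulr0.
move=> [Hs Hw] v.
rewrite (eq_bigr (fun a => incidence R src dst v a * (a0 == a)%:R +
    incidence R src dst v a * (count_mem a p)%:R)); last first.
  by move=> a _; rewrite natrD mulrDr.
rewrite big_split /= (IH (dst a0) Hw).
rewrite (bigD1 a0) //= eqxx mulr1 big1 ?addr0; last first.
  by move=> a /negbTE; rewrite eq_sym => ->; rewrite mulr0.
by rewrite /incidence Hs eq_sym [dst a0 == v]eq_sym; ring.
Qed.

Lemma path_flow k : exists x : A -> R, XK k x /\ forall i : 'I_#|A1|, x (enum_val i) = 0.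
Proof.
case: Hnet => _ [_ [_ [Hod Hp]]].
have [p [Hw Hall]] := Hp k.
exists (fun a => (count_mem a p)%:R : R); split; first split.
- by move=> v; rewrite (walk_flow Hw).
- by move=> a.
move=> i; apply/eqP; rewrite pnatr_eq0; apply/eqP/count_memPn.
apply/negP => Hin; move/allP: Hall => /(_ _ Hin) /=.
by rewrite enum_valP.
Qed.

Lemma fk_ub k (t : vecn) x : nonneg t -> XK k x ->
  (FK k t <= (costx c x + tollx t x)%:E)%E.
Proof. by move=> Ht Hx; rewrite /fk Ht; apply: ereal_inf_lbound; exists x. Qed.

Lemma fk_lb k (t : vecn) r : nonneg t ->
  (forall x, XK k x -> r <= costx c x + tollx t x) -> (r%:E <= FK k t)%E.
Proof.
move=> Ht H; rewrite /fk Ht; apply: le_ereal_inf_tmp => _ [x Hx <-].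
by rewrite lee_fin; exact: H.
Qed.

Lemma fk_neg k (t : vecn) : ~~ nonneg t -> FK k t = -oo%E.
Proof. by move=> Ht; rewrite /fk (negbTE Ht). Qed.

Lemma fk_fin k (t : vecn) : nonneg t -> exists r, FK k t = r%:E /\ 0 <= r.
Proof.
move=> Ht; have [xp [Hxp _]] := path_flow k.
have h1 := fk_ub Ht Hxp.
have h0 : ((0:R)%:E <= FK k t)%E.
  apply: fk_lb => // x Hx; apply: addr_ge0.
    exact: costx_ge0 (proj2 Hx).
  exact: tollx_ge0 Ht (proj2 Hx).
move: h0 h1; case: (FK k t) => [r| |] //= h0 h1.
by exists r; split => //; rewrite -lee_fin.
Qed.

Lemma nonneg0 : nonneg (0 : vecn).
Proof. by apply/forallP => i; rewrite mxE. Qed.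

Lemma dotn_ge0 (t u : vecn) : nonneg t -> nonneg u -> 0 <= dotn t u.
Proof.
move=> /nonnegP Ht /nonnegP Hu; apply: sumr_ge0 => i _; exact: mulr_ge0.
Qed.

Lemma gk_ub k (u t : vecn) : (FK k t - (dotn t u)%:E <= GK k u)%E.
Proof. by apply: ereal_sup_ubound; exists t. Qed.

Lemma g_ub (u t : vecn) : (Ff t - (dotn t u)%:E <= Gg u)%E.
Proof. by apply: ereal_sup_ubound; exists t. Qed.

Lemma gk_ge0 k (u : vecn) : ((0:R)%:E <= GK k u)%E.
Proof.
apply: le_trans (gk_ub k u 0).
have [r [Er Hr]] := fk_fin k nonneg0.
by rewrite Er dotn0 -EFinB subr0 lee_fin.
Qed.

Lemma g_ge0 (u : vecn) : ((0:R)%:E <= Gg u)%E.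
Proof.
apply: le_trans (g_ub u 0); rewrite dotn0 /f (_ : (- (0:R)%:E)%E = 0%E) ?oppe0 //.
rewrite adde0; apply: sume_ge0 => k _.
by have [r [-> Hr]] := fk_fin k nonneg0.
Qed.

Lemma gk_fin k (u : vecn) : nonneg u -> exists r, GK k u = r%:E /\ 0 <= r.
Proof.
move=> Hu; have [xp [Hxp Hxp0]] := path_flow k.
have h1 : (GK k u <= (costx c xp)%:E)%E.
  apply: ge_ereal_sup => _ [t _ <-].
  case: (boolP (nonneg t)) => Ht; last by rewrite fk_neg // addNye leNye.
  have [r [Er _]] := fk_fin k Ht.
  have := fk_ub Ht Hxp; rewrite Er lee_fin.
  have -> : tollx t xp = 0 by rewrite /tollx big1 // => i _; rewrite Hxp0 mulr0.
  rewrite addr0 => H; rewrite -EFinB lee_fin.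
  have := dotn_ge0 Ht Hu; lra.
move: (gk_ge0 k u) h1; case: (GK k u) => [r| |] //= h0 h1.
by exists r; split => //; rewrite -lee_fin.
Qed.

Lemma g_easy (uk : K -> vecn) : (Gg (\sum_k uk k) <= \sum_k GK k (uk k))%E.
Proof.
apply: ge_ereal_sup => _ [t _ <-].
rewrite dotn_sum -EFinN -sumrN -sumEFin /f -big_split /=.
by apply: lee_sum => k _; rewrite EFinN; apply: gk_ub.
Qed.

Lemma gk_conv k (u v : vecn) a b l : GK k u = a%:E -> GK k v = b%:E -> 0 <= l <= 1 ->
  (GK k (l *: u + (1 - l) *: v) <= (l * a + (1 - l) * b)%:E)%E.
Proof.
move=> Ea Eb /andP[Hl0 Hl1].
apply: ge_ereal_sup => _ [t _ <-].
have hu := gk_ub k u t; have hv := gk_ub k v t.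
rewrite Ea in hu; rewrite Eb in hv.
move: hu hv; case: (FK k t) => [r| |] hu hv.
- rewrite dotnD !dotnZ -EFinB lee_fin.
  move: hu hv; rewrite -!EFinB !lee_fin => hu hv.
  have h1 := ler_wpM2l Hl0 hu.
  have Hl1' : 0 <= 1 - l by lra.
  have h2 := ler_wpM2l Hl1' hv.
  move: h1 h2; set du := dotn t u; set dv := dotn t v.
  move=> h1 h2; clear -h1 h2; nra.
- by move: hu; rewrite addye.
- by rewrite addNye leNye.
Qed.

Lemma sum_pair (F : K * A -> R) : \sum_j F j = \sum_k \sum_a F (k, a).
Proof. by rewrite pair_bigA; apply: eq_bigr => -[]. Qed.

Definition Idx := (K * A + (K * V * bool + ('I_#|A1| + 'I_1)))%type.
Definition sgn (s : bool) : R := if s then 1 else -1.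

Definition aM (i : Idx) (j : K * A) : R :=
  match i with
  | inl ka => if j == ka then -1 else 0
  | inr (inl (k, v, s)) => if j.1 == k then sgn s * incidence R src dst v j.2 else 0
  | inr (inr (inl i)) => (j.2 == enum_val i)%:R
  | inr (inr (inr _)) => c j.2
  end.

Definition bM (u : vecn) (gam : R) (i : Idx) : R :=
  match i with
  | inl _ => 0
  | inr (inl (k, v, s)) => sgn s * bvec R o d k v
  | inr (inr (inl i)) => u ord0 i
  | inr (inr (inr _)) => gam
  end.

Definition rowv (i : Idx) (X : K * A -> R) : R :=
  match i with
  | inl ka => - X ka
  | inr (inl (k, v, s)) => sgn s * \sum_a incidence R src dst v a * X (k, a)
  | inr (inr (inl i)) => \sum_k X (k, enum_val i)
  | inr (inr (inr _)) => \sum_k costx c (fun a => X (k, a))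
  end.

Lemma rowvE i X : \sum_j aM i j * X j = rowv i X.
Proof.
case: i => [ka|[[[k v] s]|[i|i]]] /=.
- rewrite (bigD1 ka) //= eqxx mulN1r big1 ?addr0 // => j /negbTE ->.
  by rewrite mul0r.
- rewrite sum_pair (bigD1 k) //= [X in _ + X]big1 ?addr0; last first.
    move=> k' /negbTE Hk; apply: big1 => a _ /=; by rewrite Hk mul0r.
  by rewrite mulr_sumr; apply: eq_bigr => a _ /=; rewrite eqxx mulrA.
- rewrite sum_pair; apply: eq_bigr => k _.
  rewrite (bigD1 (enum_val i)) //= eqxx mul1r big1 ?addr0 // => a /negbTE ->.
  by rewrite mul0r.
- by rewrite sum_pair; apply: eq_bigr => k _; rewrite /costx.
Qed.

Lemma tollxZ (t : vecn) s x : tollx (s *: t) x = s * tollx t x.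
Proof.
by rewrite /tollx mulr_sumr; apply: eq_bigr => i _; rewrite mxE mulrA.
Qed.

Lemma dotnZl (t u : vecn) s : dotn (s *: t) u = s * dotn t u.
Proof.
by rewrite /dotn mulr_sumr; apply: eq_bigr => i _; rewrite mxE mulrA.
Qed.

Lemma dual_contra (u : vecn) gam (y : Idx -> R) : Gg u = gam%:E ->
  (forall i, 0 <= y i) -> (forall j, \sum_i y i * aM i j = 0) ->
  \sum_i y i * bM u gam i < 0 -> False.
Proof.
move=> Hg Hy0 Hya Hyb.
pose t : vecn := \row_i y (inr (inr (inl i))).
pose lam := y (inr (inr (inr ord0))).
pose B k' := \sum_(i : K * V * bool) y (inr (inl i)) *
    (sgn i.2 * (if i.1.1 == k' then bvec R o d k' i.1.2 else 0)).
have key : forall X, \sum_i y i * rowv i X = 0.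
  move=> X; transitivity (\sum_j (\sum_i y i * aM i j) * X j).
    under eq_bigr do rewrite -rowvE mulr_sumr.
    rewrite exchange_big; apply: eq_bigr => j _; rewrite mulr_suml.
    by apply: eq_bigr => i _; rewrite mulrA.
  by rewrite big1 // => j _; rewrite Hya mul0r.
have Hk : forall k x, XK k x -> - B k <= lam * costx c x + tollx t x.
  move=> k x [Hflow Hx0].
  pose X := fun j : K * A => if j.1 == k then x j.2 else 0.
  have := key X; rewrite big_sumType /= big_sumType /= big_sumType /= big_ord1 /=.
  have hP1 : \sum_(ka : K * A) y (inl ka) * - X ka <= 0.
    apply: sumr_le0 => ka _; rewrite mulrN oppr_le0; apply: mulr_ge0 => //.
    by rewrite /X; case: ifP.
  have hP2 : \sum_(i : K * V * bool) y (inr (inl i)) * rowv (inr (inl i)) X = B k.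
    apply: eq_bigr => -[[k' v] s] _ /=; congr (_ * (_ * _)).
    rewrite /X /=; case: (eqVneq k' k) => [Heq|Hne].
      by subst k'; rewrite -(Hflow v).
    by rewrite big1 // => a _; rewrite mulr0.
  have hP3 : \sum_(i < #|A1|) y (inr (inr (inl i))) * (\sum_k' X (k', enum_val i)) = tollx t x.
    apply: eq_bigr => i _; rewrite mxE; congr (_ * _).
    rewrite (bigD1 k) //= /X /= eqxx big1 ?addr0 // => k' /negbTE ->.
    by [].
  have hP4 : \sum_k' costx c (fun a => X (k', a)) = costx c x.
    rewrite (bigD1 k) //= /X /= eqxx big1 ?addr0 // => k' /negbTE Hk'.
    by rewrite /costx big1 // => a _; rewrite Hk' mulr0.
  rewrite hP2 hP3 hP4 -/lam => H.
  move: hP1 H; set P1 := \sum_(ka : K * A) _; move=> hP1 H.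
  have -> : lam * costx c x + tollx t x = - P1 - B k.
    by apply/eqP; rewrite -subr_eq0; apply/eqP; rewrite -H; ring.
  by move: hP1; clear; lra.
have Hb : \sum_k B k + dotn t u + lam * gam < 0.
  move: Hyb; rewrite big_sumType /= big_sumType /= big_sumType /= big_ord1 /=.
  rewrite big1 ?add0r; last by move=> ka _; rewrite mulr0.
  have -> : \sum_(i : K * V * bool) y (inr (inl i)) * bM u gam (inr (inl i)) = \sum_k B k.
    rewrite /B exchange_big /=; apply: eq_bigr => -[[k v] s] _ /=.
    rewrite [RHS](bigD1 k) //= eqxx [X in _ + X]big1 ?addr0 // => k' /negbTE.
    by rewrite eq_sym => ->; rewrite !mulr0.
  have -> : \sum_(i < #|A1|) y (inr (inr (inl i))) * bM u gam (inr (inr (inl i))) = dotn t u.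
    by apply: eq_bigr => i _; rewrite mxE.
  by rewrite addrA.
have Hlam : 0 <= lam by apply: Hy0.
have Hs : forall s, 0 < s -> s * lam <= 1 ->
    ((s * (- \sum_k B k - dotn t u))%:E <= Gg u)%E.
  move=> s Hs Hsl; apply: le_trans (g_ub u (s *: t)).
  have Hnt : nonneg (s *: t).
    by apply/forallP => i; rewrite !mxE; apply: mulr_ge0; [exact: ltW|].
  rewrite dotnZl mulrDr [s * - dotn t u]mulrN EFinB; apply: leeB => //.
  rewrite -sumrN mulr_sumr -sumEFin /f; apply: lee_sum => k _.
  apply: fk_lb => // x Hx; rewrite tollxZ.
  have h0 := Hk k x Hx.
  have hC := costx_ge0 (proj2 Hx).
  have h1 := ler_wpM2l (ltW Hs) h0.
  have h2 : s * lam * costx c x <= costx c x.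
    by rewrite -[X in _ <= X]mul1r; apply: ler_wpM2r.
  move: h1 h2; set C := costx c x; set T := tollx t x; move=> h1 h2.
  rewrite mulrDr mulrA in h1; clear -h1 h2; lra.
set D := - \sum_k B k - dotn t u.
have HD : lam * gam < D by rewrite /D; move: Hb; clear; lra.
have [s [Hs0 [Hsl HsD]]] : exists s, 0 < s /\ s * lam <= 1 /\ gam < s * D.
  case: (ltrgt0P lam) => [Hl|Hl|Hl].
  - exists lam^-1; split; first by rewrite invr_gt0.
    split; first by rewrite mulVf // gt_eqF.
    by rewrite mulrC ltr_pdivlMr // mulrC.
  - by move: Hlam; rewrite leNgt Hl.
  - have HD0 : 0 < D by move: HD; rewrite Hl mul0r.
    exists ((`|gam| + 1) / D); split.
      by apply: divr_gt0 => //; apply: ltr_pwDr.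
    split; first by rewrite Hl mulr0.
    rewrite divfK ?gt_eqF //; apply: le_lt_trans (ler_norm gam) _.
    by rewrite ltrDl.
have := Hs s Hs0 Hsl; rewrite Hg lee_fin => H.
by move: HsD; rewrite ltNge H.
Qed.

Lemma dotn_r0 (t : vecn) : dotn t 0 = 0.
Proof. by rewrite /dotn big1 // => i _; rewrite mxE mulr0. Qed.

Lemma attain (u : vecn) gam : Gg u = gam%:E ->
  exists wk : K -> vecn, bilevel_feasible_decomposition src dst c o d u wk.
Proof.
move=> Hg.
case: (pickP (fun _ : K => true)) => [k0 _|HK0]; last first.
  have Hf : forall t, Ff t = 0%E.
    by move=> t; rewrite /f big1 // => k; have := HK0 k.
  have Hu : u = 0.
    have Huu : forall s, 0 < s -> s * dotn u u <= gam.
      move=> s Hs; have := g_ub u (- s *: u); rewrite Hg Hf dotnZl sub0e.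
      by rewrite -EFinN lee_fin mulNr opprK.
    have Hd0 : dotn u u = 0.
      apply/eqP; rewrite eq_le; apply/andP; split; last first.
        by apply: sumr_ge0 => i _; rewrite -expr2 sqr_ge0.
      rewrite leNgt; apply/negP => Hpos.
      have := Huu ((`|gam| + 1) / dotn u u).
      rewrite divfK ?gt_eqF // => /(_ (divr_gt0 (ltr_pwDr ltr01 (normr_ge0 _)) Hpos)).
      exact: absp1_le.
    apply/rowP => i; rewrite mxE.
    have := psumr_eq0P (fun i _ => sqr_ge0 (u ord0 i)) _ (isT : predT i).
    rewrite -(eq_bigr _ (fun i _ => expr2 (u ord0 i))) => /(_ Hd0) /eqP.
    by rewrite sqrf_eq0 => /eqP.
  subst u.
  have Hgam : gam = 0.
    apply/eqP; rewrite eq_le; apply/andP; split; rewrite -lee_fin -Hg.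
      apply: ge_ereal_sup => _ [t _ <-]; by rewrite Hf dotn_r0 sub0e oppe0.
    exact: g_ge0.
  exists (fun _ => 0); split; first split.
  - by move=> k; have := HK0 k.
  - by rewrite big1.
  - by rewrite Hg Hgam big1 // => k; have := HK0 k.
case: (farkas (@aM) (bM u gam)) => [[X HX]|[y [Hy0 [Hya Hyb]]]]; last first.
  by exfalso; apply: (dual_contra Hg Hy0 Hya Hyb).
have HXr : forall i, rowv i X <= bM u gam i by move=> i; rewrite -rowvE.
pose xk k := fun a => X (k, a).
have Hxk : forall k, XK k (xk k).
  move=> k; split.
  - move=> v; have h1 := HXr (inr (inl (k, v, true))).
    have h2 := HXr (inr (inl (k, v, false))).
    move: h1 h2 => /=; rewrite /sgn !mul1r !mulN1r lerN2 => h1 h2.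
    by apply/eqP; rewrite eq_le h1 h2.
  - by move=> a; have := HXr (inl (k, a)); rewrite /= oppr_le0.
have Htoll : forall i, \sum_k X (k, enum_val i) <= u ord0 i.
  by move=> i; apply: (HXr (inr (inr (inl i)))).
have Hcost : \sum_k costx c (xk k) <= gam by apply: (HXr (inr (inr (inr ord0)))).
pose wk k : vecn := \row_i (X (k, enum_val i) +
   (if k == k0 then u ord0 i - \sum_k' X (k', enum_val i) else 0)).
exists wk.
have Hdec : decomposition u wk.
  split.
  - move=> k; apply/forallP => i; rewrite !mxE; apply: addr_ge0.
      exact: (proj2 (Hxk k)).
    by case: ifP => _ //; rewrite subr_ge0.
  - apply/rowP => i; rewrite summxE; under eq_bigr do rewrite !mxE.
    rewrite big_split /= [X in _ + X](bigD1 k0) //= eqxx [X in _ + (_ + X)]big1 ?addr0; last first.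
      by move=> k /negbTE ->.
    by rewrite addrC subrK.
split => //.
apply/le_anti/andP; split.
  by have := g_easy wk; rewrite (proj2 Hdec).
apply: (@le_trans _ _ (\sum_k (costx c (xk k))%:E)%E).
  apply: lee_sum => k _; apply: ge_ereal_sup => _ [t _ <-].
  case: (boolP (nonneg t)) => Ht; last by rewrite fk_neg // addNye leNye.
  have := fk_ub Ht (Hxk k); have [r [Er _]] := fk_fin k Ht.
  rewrite Er -EFinB !lee_fin => H.
  have : tollx t (xk k) <= dotn t (wk k).
    rewrite /tollx /dotn; apply: ler_sum => i _; rewrite mxE.
    apply: ler_wpM2l; first exact: nonnegP.
    rewrite lerDl; case: ifP => _ //; rewrite subr_ge0; exact: Htoll.
  by move: H; clear; lra.
by rewrite sumEFin Hg lee_fin.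
Qed.

Lemma sum_le_eq (I : finType) (x y : I -> R) :
  (forall i, x i <= y i) -> \sum_i y i <= \sum_i x i -> forall i, x i = y i.
Proof.
move=> H Hs i; apply/eqP; rewrite eq_sym -subr_eq0; apply/eqP.
apply: (@psumr_eq0P _ _ predT (fun i => y i - x i)) => //.
  by move=> k _; rewrite subr_ge0.
apply/eqP; rewrite eq_le sumrB subr_le0 Hs /=.
by rewrite subr_ge0; apply: ler_sum => k _.
Qed.

Lemma fin_of (e : \bar R) r : ((0:R)%:E <= e)%E -> (e <= r%:E)%E -> e = (fine e)%:E.
Proof. by case: e. Qed.

Lemma comb_shift l (s p1 q1 : vecn) (t p2 q2 : R) :
  comb l (s + p1, t + p2) (s + q1, t + q2) =
  (s + (l *: p1 + (1 - l) *: q1), t + (l * p2 + (1 - l) * q2)).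
Proof.
rewrite /comb /=; congr (_, _); last by ring.
by rewrite !scalerDr addrACA -scalerDl [l + _]addrC subrK scale1r.
Qed.

Lemma epi_replace (z : K -> vecn) (m : K -> R) j (v : vecn) (bv : R) :
  (forall k, (GK k (z k) <= (m k)%:E)%E) -> (GK j v <= bv%:E)%E ->
  epi Gg (\sum_k z k - z j + v, \sum_k m k - m j + bv).
Proof.
move=> Hm Hv; rewrite /epi /=.
have -> : \sum_k z k - z j + v = \sum_k (if k == j then v else z k).
  rewrite [RHS](bigD1 j) //= eqxx [X in _ = _ + X](eq_bigr (fun k => z k)); last by move=> k /negbTE ->.
  by rewrite (bigD1 j) //= [z j + _]addrC addrK addrC.
apply: le_trans (g_easy _) _.
have -> : \sum_k m k - m j + bv = \sum_k (if k == j then bv else m k).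
  rewrite [RHS](bigD1 j) //= eqxx [X in _ = _ + X](eq_bigr (fun k => m k)); last by move=> k /negbTE ->.
  by rewrite (bigD1 j) //= [m j + _]addrC addrK addrC.
rewrite -sumEFin; apply: lee_sum => k _.
by case: eqP => [->|_].
Qed.

Lemma half_bounds : 0 < (1/2 : R) < 1.
Proof. by apply/andP; split; lra. Qed.

Lemma half_eq : (1 - 1/2 : R) = 1/2.
Proof. by field. Qed.

Lemma main_fwd (w : vecn) : strongly_bf_wrt Gg w ->
  exists wk : K -> vecn,
    bilevel_feasible_decomposition src dst c o d w wk /\
    (forall wk' : K -> vecn,
        bilevel_feasible_decomposition src dst c o d w wk' -> forall k, wk' k = wk k) /\
    (forall k, indiv_strongly_bilevel_feasible src dst c o d k (wk k)).
Proof.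
move=> /sbf_char [Hw [gam [Hg HE]]].
have [wk [[Hnn Hsum] Hgw]] := attain Hg.
pose a k := fine (GK k (wk k)).
have Ea : forall k, GK k (wk k) = (a k)%:E.
  by move=> k; have [r [Er _]] := gk_fin k (Hnn k); rewrite /a Er.
have Hgam : gam = \sum_k a k.
  have : gam%:E = (\sum_k a k)%:E.
    by rewrite -Hg Hgw -sumEFin; apply: eq_bigr => k _; rewrite Ea.
  by case.
exists wk; split; first by split; [split|].
have Hl := half_bounds.
have Hl' : 0 <= (1/2 : R) <= 1 by apply/andP; split; lra.
split.
- move=> wk' [[Hnn' Hsum'] Hgw'] j.
  pose b k := fine (GK k (wk' k)).
  have Eb : forall k, GK k (wk' k) = (b k)%:E.
    by move=> k; have [r [Er _]] := gk_fin k (Hnn' k); rewrite /b Er.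
  have Hgamb : gam = \sum_k b k.
    have : gam%:E = (\sum_k b k)%:E.
      by rewrite -Hg Hgw' -sumEFin; apply: eq_bigr => k _; rewrite Eb.
    by case.
  pose mid k := (1/2 : R) *: wk k + (1 - 1/2) *: wk' k.
  have Hnnm : forall k, nonneg (mid k).
    move=> k; apply/forallP => i; rewrite !mxE; rewrite half_eq.
    apply: addr_ge0; apply: mulr_ge0; try exact: nonnegP.
      by case/andP: Hl' => ->.
    by case/andP: Hl' => ->.
  pose m k := fine (GK k (mid k)).
  have Em : forall k, GK k (mid k) = (m k)%:E.
    by move=> k; have [r [Er _]] := gk_fin k (Hnnm k); rewrite /m Er.
  have Hmle : forall k, m k <= (1/2) * a k + (1 - 1/2) * b k.
    by move=> k; have := gk_conv (Ea k) (Eb k) Hl'; rewrite -/(mid k) Em lee_fin.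
  have Hsmid : \sum_k mid k = w.
    rewrite big_split /= -!scaler_sumr Hsum Hsum'.
    by rewrite -scalerDl addrC subrK scale1r.
  have Hmge : gam <= \sum_k m k.
    have := g_easy mid; rewrite Hsmid Hg.
    by rewrite (eq_bigr (fun k => (m k)%:E)) ?sumEFin ?lee_fin // => k _; rewrite Em.
  have Havg : \sum_k ((1/2) * a k + (1 - 1/2) * b k) = gam.
    by rewrite big_split /= -!mulr_sumr -Hgam -Hgamb; ring.
  have Havg' : \sum_k ((1/2) * a k + (1 - 1/2) * b k) <= \sum_k m k by rewrite Havg.
  have Hmeq := sum_le_eq Hmle Havg'.
  have HmE : forall k, (GK k (mid k) <= (m k)%:E)%E by move=> k; rewrite Em.
  have HbE : (GK j (wk' j) <= (b j)%:E)%E by rewrite Eb.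
  have HaE : (GK j (wk j) <= (a j)%:E)%E by rewrite Ea.
  have Hsm : \sum_k m k = gam.
    by rewrite -Havg; apply: eq_bigr => k _; rewrite Hmeq.
  have P1 := @epi_replace mid m j (wk' j) (b j) HmE HbE.
  have P2 := @epi_replace mid m j (wk j) (a j) HmE HaE.
  have Hc : comb (1/2) (\sum_k mid k - mid j + wk' j, \sum_k m k - m j + b j)
                       (\sum_k mid k - mid j + wk j, \sum_k m k - m j + a j) = (w, gam).
    rewrite comb_shift; congr (_, _).
      have -> : (1/2 : R) *: wk' j + (1 - 1/2) *: wk j = mid j by rewrite /mid half_eq addrC.
      by rewrite subrK Hsmid.
    have -> : (1/2 : R) * b j + (1 - 1/2) * a j = m j by rewrite Hmeq half_eq addrC.
    by rewrite subrK Hsm.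
  have [E1 E2] := HE _ _ _ P1 P2 Hl Hc.
  rewrite -Hsmid -Hsm in E1 E2.
  case: E1 => /shift_cancel E1 _; case: E2 => /shift_cancel E2 _.
  by rewrite E1 E2.
- move=> j; apply/sbf_char; split; first exact: Hnn j.
  exists (a j); split; first exact: Ea j.
  move=> [pu pr] [qu qr] l ep eq Hlj Hc.
  have Hle : forall k, (GK k (wk k) <= (a k)%:E)%E by move=> k; rewrite Ea.
  have P' := @epi_replace wk a j pu pr Hle ep.
  have Q' := @epi_replace wk a j qu qr Hle eq.
  have Hc' : comb l (\sum_k wk k - wk j + pu, \sum_k a k - a j + pr)
                    (\sum_k wk k - wk j + qu, \sum_k a k - a j + qr) = (w, gam).
    rewrite comb_shift; move: Hc; rewrite /comb /= => -[-> ->].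
    by rewrite !subrK Hsum Hgam.
  have [E1 E2] := HE _ _ _ P' Q' Hlj Hc'.
  move: E1 E2; rewrite -Hsum -Hgam.
  by move=> [/shift_cancel -> /shift_cancel ->] [/shift_cancel -> /shift_cancel ->].
Qed.



Lemma main_bwd (w : vecn) (wk : K -> vecn) : nonneg w ->
  bilevel_feasible_decomposition src dst c o d w wk ->
  (forall wk' : K -> vecn,
      bilevel_feasible_decomposition src dst c o d w wk' -> forall k, wk' k = wk k) ->
  (forall k, indiv_strongly_bilevel_feasible src dst c o d k (wk k)) ->
  strongly_bf_wrt Gg w.
Proof.
move=> Hw [[Hnn Hsum] Hgw] Huniq Hind.
pose a k := fine (GK k (wk k)).
have Ea : forall k, GK k (wk k) = (a k)%:E.
  by move=> k; have [r [Er _]] := gk_fin k (Hnn k); rewrite /a Er.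
have HEk : forall k, Ext (GK k) (wk k) (a k).
  move=> k; have := Hind k; rewrite /indiv_strongly_bilevel_feasible sbf_char.
  by move=> -[_ [rho [Hr HEr]]]; rewrite /a Hr.
pose gam := \sum_k a k.
have Hg : Gg w = gam%:E.
  by rewrite Hgw -sumEFin; apply: eq_bigr => k _; rewrite Ea.
apply/sbf_char; split => //; exists gam; split => //.
move=> [pu pr] [qu qr] l ep eq Hl Hc.
have /andP[Hl0 Hl1] := Hl.
move: Hc; rewrite /comb /= => -[Hc1 Hc2].
have Ep := fin_of (g_ge0 pu) ep.
have Eq := fin_of (g_ge0 qu) eq.
set gp := fine (Gg pu) in Ep; set gq := fine (Gg qu) in Eq.
have gp_le : gp <= pr by rewrite -lee_fin -Ep.
have gq_le : gq <= qr by rewrite -lee_fin -Eq.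
have [uk [[Hnnu Hsumu] Hgu]] := attain Ep.
have [vk [[Hnnv Hsumv] Hgv]] := attain Eq.
pose al k := fine (GK k (uk k)).
have Eal : forall k, GK k (uk k) = (al k)%:E.
  by move=> k; have [r [Er _]] := gk_fin k (Hnnu k); rewrite /al Er.
pose be k := fine (GK k (vk k)).
have Ebe : forall k, GK k (vk k) = (be k)%:E.
  by move=> k; have [r [Er _]] := gk_fin k (Hnnv k); rewrite /be Er.
have Hgp : gp = \sum_k al k.
  have : gp%:E = (\sum_k al k)%:E.
    by rewrite -Ep Hgu -sumEFin; apply: eq_bigr => k _; rewrite Eal.
  by case.
have Hgq : gq = \sum_k be k.
  have : gq%:E = (\sum_k be k)%:E.
    by rewrite -Eq Hgv -sumEFin; apply: eq_bigr => k _; rewrite Ebe.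
  by case.
have Hl' : 0 <= l <= 1 by apply/andP; split; apply: ltW.
have Hl1' : 0 <= 1 - l by rewrite subr_ge0 ltW.
pose zk k := l *: uk k + (1 - l) *: vk k.
have Hnnz : forall k, nonneg (zk k).
  move=> k; apply/forallP => i; rewrite !mxE.
  by apply: addr_ge0; apply: mulr_ge0; rewrite ?(ltW Hl0) //; apply: nonnegP.
pose ze k := fine (GK k (zk k)).
have Eze : forall k, GK k (zk k) = (ze k)%:E.
  by move=> k; have [r [Er _]] := gk_fin k (Hnnz k); rewrite /ze Er.
have Hzle : forall k, ze k <= l * al k + (1 - l) * be k.
  by move=> k; have := gk_conv (Eal k) (Ebe k) Hl'; rewrite -/(zk k) Eze lee_fin.
have Hsumz : \sum_k zk k = w.
  by rewrite big_split /= -!scaler_sumr Hsumu Hsumv.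
have Hzge : gam <= \sum_k ze k.
  have := g_easy zk; rewrite Hsumz Hg.
  by rewrite (eq_bigr (fun k => (ze k)%:E)) ?sumEFin ?lee_fin // => k _; rewrite Eze.
have Hchain : \sum_k (l * al k + (1 - l) * be k) = l * gp + (1 - l) * gq.
  by rewrite big_split /= -!mulr_sumr Hgp Hgq.
have Hlg : l * gp + (1 - l) * gq <= gam.
  rewrite -Hc2; apply: lerD; apply: ler_wpM2l => //; exact: ltW.
have Havg : \sum_k (l * al k + (1 - l) * be k) <= \sum_k ze k.
  by rewrite Hchain; apply: le_trans Hlg Hzge.
have Hzeq := sum_le_eq Hzle Havg.
have Hsze : \sum_k ze k = gam.
  apply/le_anti/andP; split => //.
  by rewrite (eq_bigr _ (fun k _ => Hzeq k)) Hchain.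
have Hzbfd : bilevel_feasible_decomposition src dst c o d w zk.
  split; first by split.
  by rewrite Hg -Hsze -sumEFin; apply: eq_bigr => k _; rewrite Eze.
have Hzw := Huniq zk Hzbfd.
have Hcomp : forall k, (uk k, al k) = (wk k, a k) /\ (vk k, be k) = (wk k, a k).
  move=> k; apply: (HEk k _ _ l) => //.
  - by rewrite /epi /= Eal.
  - by rewrite /epi /= Ebe.
  rewrite /comb /=; congr (_, _); first by rewrite -/(zk k) Hzw.
  by rewrite -Hzeq /ze -/(zk k) Hzw.
have Hpu : pu = w.
  by rewrite -Hsumu -Hsum; apply: eq_bigr => k _; case: (Hcomp k) => -[-> _] _.
have Hqu : qu = w.
  by rewrite -Hsumv -Hsum; apply: eq_bigr => k _; case: (Hcomp k) => _ [-> _].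
have Hgpg : gp = gam.
  by rewrite Hgp; apply: eq_bigr => k _; case: (Hcomp k) => -[_ ->] _.
have Hgqg : gq = gam.
  by rewrite Hgq; apply: eq_bigr => k _; case: (Hcomp k) => _ [_ ->].
have [Hp0 Hq0] : pr - gam = 0 /\ qr - gam = 0.
  apply: (pos_comb_eq (l := l)) => //.
  - by rewrite subr_ge0 -Hgpg.
  - by rewrite subr_ge0 -Hgqg.
  by move: Hc2; lra.
by rewrite Hpu Hqu; move/eqP: Hp0; move/eqP: Hq0; rewrite !subr_eq0 => /eqP -> /eqP ->.
Qed.
End Net.


Theorem theorem4 (R : realType) (V A : finType) (src dst : A -> V) (c : A -> R)
  (A1 : {set A}) (K : finType) (o d : K -> V)
  (Hnet : network_assumptions src dst c A1 o d)
  (w : 'rV[R]_#|A1|) (Hw : nonneg w) :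
  strongly_bilevel_feasible src dst c o d w <->
  exists wk : K -> 'rV[R]_#|A1|,
    bilevel_feasible_decomposition src dst c o d w wk /\
    (forall wk' : K -> 'rV[R]_#|A1|,
        bilevel_feasible_decomposition src dst c o d w wk' -> forall k, wk' k = wk k) /\
    (forall k, indiv_strongly_bilevel_feasible src dst c o d k (wk k)).
Proof.
split.
  by move=> H; apply: (main_fwd Hnet H).
by move=> [wk [H1 [H2 H3]]]; apply: (main_bwd Hnet Hw H1 H2 H3).
Qed.
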